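(* Let $s=(x,y,u,v)$ with $x,y,u,v\ge0$ and $x+y+u+v>4$, and write $W^k(s)=(x^{(k)},y^{(k)},u^{(k)},v^{(k)})$. (a) If there exists $k\ge0$ with $(x^{(k)}+y^{(k)})(u^{(k)}+v^{(k)})<4$, then $\lim_{n\to\infty}W^n(s)=(0,0,0,0)$. (b) If $\max\{\tfrac{xu}{4},\tfrac{yu}{16},\tfrac{yv}{9}\}>1$, then at least one coordinate of $W^n(s)$ tends to $+\infty$ as $n\to\infty$.
   Context: $W:\mathbb{R}^4\to\mathbb{R}^4$ is the map $W(x,y,u,v)=(x',y',u',v')$ with $x'=\tfrac12 xu+\tfrac14 yu$, $y'=\tfrac12 xv+\tfrac14 yu+\tfrac13 yv$, $u'=\tfrac12 xu+\tfrac12 xv+\tfrac14 yu+\tfrac13 yv$, $v'=\tfrac14 yu+\tfrac13 yv$. $W^k$ denotes the $k$-fold iterate ($W^0$ the identity). *)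

(* Defs.v *)
From Stdlib Require Import Reals.
Open Scope R_scope.

Record R4 := mkR4 { cx : R; cy : R; cu : R; cv : R }.

Definition W (s : R4) : R4 :=
  let x := cx s in let y := cy s in let u := cu s in let v := cv s in
  mkR4 (/2 * x * u + /4 * y * u)
       (/2 * x * v + /4 * y * u + /3 * y * v)
       (/2 * x * u + /2 * x * v + /4 * y * u + /3 * y * v)
       (/4 * y * u + /3 * y * v).

Fixpoint Witer (k : nat) (s : R4) : R4 :=
  match k with
  | O => s
  | S k' => W (Witer k' s)
  end.

(* Main.v *)
Require Import Defs.
From Stdlib Require Import Reals Lra Lia Psatz.
Open Scope R_scope.

Definition nn (s : R4) := 0 <= cx s /\ 0 <= cy s /\ 0 <= cu s /\ 0 <= cv s.

Lemma W_nn s : nn s -> nn (W s).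
Proof.
  destruct s as [x y u v]; unfold nn, W; simpl; intros (?&?&?&?).
  repeat split; nra.
Qed.

Lemma Witer_nn n s : nn s -> nn (Witer n s).
Proof. induction n; simpl; auto using W_nn. Qed.

Definition P (s : R4) := (cx s + cy s) * (cu s + cv s).

Lemma P_W s : nn s -> 0 <= P s /\ P (W s) <= P s * P s / 4 /\
  cx (W s) <= 2/3 * P s /\ cy (W s) <= 2/3 * P s /\
  cu (W s) <= 2/3 * P s /\ cv (W s) <= 2/3 * P s.
Proof.
  destruct s as [x y u v]; unfold nn, P, W; simpl; intros (?&?&?&?).
  assert (0 <= x*u) by nra. assert (0 <= x*v) by nra.
  assert (0 <= y*u) by nra. assert (0 <= y*v) by nra.
  repeat split; try nra.
Qed.

Lemma conv0 (p f : nat -> R) k : (forall n, 0 <= p n) ->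
  (forall n, p (S n) <= p n * p n / 4) -> p k < 4 ->
  (forall n, 0 <= f n) -> (forall n, f (S n) <= 2/3 * p n) -> Un_cv f 0.
Proof.
  intros Hp Hs Hk Hf Hfs.
  set (r := p k / 4).
  assert (Hr0 : 0 <= r) by (unfold r; specialize (Hp k); lra).
  assert (Hr1 : r < 1) by (unfold r; lra).
  assert (Hc : forall m, p (k + m)%nat <= p k * r ^ m).
  { induction m.
    - rewrite Nat.add_0_r; simpl; lra.
    - rewrite <- plus_n_Sm. simpl.
      assert (Hrm : 0 <= r ^ m) by (apply pow_le; lra).
      specialize (Hs (k+m)%nat). assert (Hpk := Hp k). specialize (Hp (k+m)%nat).
      assert (p (k+m)%nat <= p k).
      { assert (r ^ m <= 1).
        { clear -Hr0 Hr1. induction m; simpl; nra. }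
        nra. }
      assert (p (k+m)%nat * p (k+m)%nat / 4 <= p (k+m)%nat * r) by (unfold r; nra).
      assert (p (k+m)%nat * r <= p k * r^m * r) by nra.
      nra. }
  intros eps Heps.
  assert (Hpk := Hp k).
  destruct (pow_lt_1_zero r ltac:(rewrite Rabs_right; lra) (eps / (p k + 1))) as [N HN].
  { apply Rdiv_lt_0_compat; lra. }
  exists (S (k + N)). intros n Hn.
  destruct n as [|n]; [lia|].
  assert (Hm : exists m, n = (k + m)%nat /\ (m >= N)%nat) by (exists (n - k)%nat; lia).
  destruct Hm as [m [-> Hm]].
  specialize (HN m Hm). rewrite Rabs_right in HN by (apply Rle_ge, pow_le; lra).
  unfold R_dist. rewrite Rminus_0_r, Rabs_right by (apply Rle_ge, Hf).
  specialize (Hfs (k+m)%nat). specialize (Hc m).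
  assert (p k * r ^ m <= p k * (eps / (p k + 1))) by nra.
  assert (p k * (eps / (p k + 1)) < eps).
  { apply (Rmult_lt_reg_r (p k + 1)); [lra|].
    unfold Rdiv. rewrite Rmult_assoc, Rmult_assoc, Rinv_l by lra. nra. }
  nra.
Qed.

Lemma growth (q : nat -> R) r : r > 1 -> q 0%nat = r ->
  (forall n, q (S n) >= q n * q n) -> forall n, q n >= r + INR n * (r - 1).
Proof.
  intros Hr H0 Hs. induction n.
  - simpl; lra.
  - rewrite S_INR. specialize (Hs n).
    assert (q n >= r) by (assert (0 <= INR n) by apply pos_INR; nra).
    nra.
Qed.

Lemma infty (q f : nat -> R) r c : r > 1 -> c > 0 ->
  (forall n, q n >= r + INR n * (r - 1)) -> (forall n, f (S n) >= c * q n) ->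
  cv_infty f.
Proof.
  intros Hr Hc Hq Hf M.
  destruct (INR_archimed (r - 1) (M / c)) as [N HN]; [lra|].
  exists (S N). intros n Hn. destruct n as [|n]; [lia|].
  specialize (Hf n). specialize (Hq n).
  assert (INR N <= INR n) by (apply le_INR; lia).
  assert (INR n * (r-1) > M / c) by nra.
  assert (c * (M / c) = M) by (field; lra).
  nra.
Qed.

Theorem lemma3p5 (x y u v : R) :
  0 <= x -> 0 <= y -> 0 <= u -> 0 <= v -> x + y + u + v > 4 ->
  (* (a) *)
  ((exists k : nat,
      (cx (Witer k (mkR4 x y u v)) + cy (Witer k (mkR4 x y u v))) *
      (cu (Witer k (mkR4 x y u v)) + cv (Witer k (mkR4 x y u v))) < 4) ->
    Un_cv (fun n => cx (Witer n (mkR4 x y u v))) 0 /\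
    Un_cv (fun n => cy (Witer n (mkR4 x y u v))) 0 /\
    Un_cv (fun n => cu (Witer n (mkR4 x y u v))) 0 /\
    Un_cv (fun n => cv (Witer n (mkR4 x y u v))) 0)
  /\
  (* (b) *)
  (Rmax (x * u / 4) (Rmax (y * u / 16) (y * v / 9)) > 1 ->
    cv_infty (fun n => cx (Witer n (mkR4 x y u v))) \/
    cv_infty (fun n => cy (Witer n (mkR4 x y u v))) \/
    cv_infty (fun n => cu (Witer n (mkR4 x y u v))) \/
    cv_infty (fun n => cv (Witer n (mkR4 x y u v)))).
Proof.
  intros Hx Hy Hu Hv _.
  set (s := mkR4 x y u v).
  assert (Hnn : forall n, nn (Witer n s)) by (intro; apply Witer_nn; unfold nn, s; simpl; auto).
  split.
  - intros [k Hk].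
    assert (HP := fun n => P_W _ (Hnn n)).
    assert (Hp0 : forall n, 0 <= P (Witer n s)) by (intro n; apply (HP n)).
    assert (Hps : forall n, P (Witer (S n) s) <= P (Witer n s) * P (Witer n s) / 4)
      by (intro n; apply (HP n)).
    repeat split; eapply (conv0 (fun n => P (Witer n s)) _ k Hp0 Hps Hk);
      intro n; try apply (Hnn n); apply (HP n).
  - intros Hmax.
    destruct (Rlt_dec 1 (x*u/4)) as [Hxu|Hxu].
    +
      left.
      set (q := fun n => cx (Witer n s) * cu (Witer n s) / 4).
      apply (infty q _ (x*u/4) 2); try lra.
      * apply growth; auto.
        intro n; unfold q; simpl. destruct (Hnn n) as (?&?&?&?).
        destruct (Witer n s) as [a b c d]; simpl in *.
        assert (0 <= a*c) by nra. assert (0 <= b*c) by nra.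
        assert (0 <= b*d) by nra. assert (0 <= a*d) by nra.
        assert (a * (1/2) * c + b * (1/4) * c >= a*c/2) by nra.
        assert (a * (1/2) * c + a * (1/2) * d + b * (1/4) * c + b * (1/3) * d >= a*c/2) by nra.
        assert (0 <= a*c/2) by nra.
        unfold Rdiv in *; nra.
      * intro n; unfold q; simpl. destruct (Hnn n) as (?&?&?&?).
        destruct (Witer n s) as [a b c d]; simpl in *. nra.
    + destruct (Rlt_dec 1 (y*u/16)) as [Hyu|Hyu].
    ++
        right; left.
        set (q := fun n => cy (Witer n s) * cu (Witer n s) / 16).
        apply (infty q _ (y*u/16) 4); try lra.
      ** apply growth; auto.
        intro n; unfold q; simpl. destruct (Hnn n) as (?&?&?&?).
        destruct (Witer n s) as [a b c d]; simpl in *.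
        assert (0 <= a*c) by nra. assert (0 <= b*c) by nra.
        assert (0 <= b*d) by nra. assert (0 <= a*d) by nra.
        assert (a * (1/2) * d + b * (1/4) * c + b * (1/3) * d >= b*c/4) by nra.
        assert (a * (1/2) * c + a * (1/2) * d + b * (1/4) * c + b * (1/3) * d >= b*c/4) by nra.
        assert (0 <= b*c/4) by nra.
        unfold Rdiv in *; nra.
      ** intro n; unfold q; simpl. destruct (Hnn n) as (?&?&?&?).
        destruct (Witer n s) as [a b c d]; simpl in *. nra.
    ++
        assert (y*v/9 > 1).
        { apply Rnot_le_lt; intro. apply Rgt_not_le in Hmax; apply Hmax.
        apply Rmax_lub; [lra|apply Rmax_lub; lra]. }
        right; left.
        set (q := fun n => cy (Witer n s) * cv (Witer n s) / 9).
        apply (infty q _ (y*v/9) 3); try lra.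
      ** apply growth; auto.
        intro n; unfold q; simpl. destruct (Hnn n) as (?&?&?&?).
        destruct (Witer n s) as [a b c d]; simpl in *.
        assert (0 <= a*d) by nra. assert (0 <= b*c) by nra.
        assert (0 <= b*d) by nra.
        assert (b * (1/4) * c + b * (1/3) * d >= b*d/3) by nra.
        assert (a * (1/2) * d + b * (1/4) * c + b * (1/3) * d >= b*d/3) by nra.
        assert (0 <= b*d/3) by nra.
        unfold Rdiv in *; nra.
      ** intro n; unfold q; simpl. destruct (Hnn n) as (?&?&?&?).
        destruct (Witer n s) as [a b c d]; simpl in *. nra.
Qed.
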